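(* Every finite connected graph has a metric basis that contains no cut-vertices.
   Context: All graphs are simple. For vertices $u,v$ of a connected graph $G$, $d(u,v)$ is the length of a shortest $u$–$v$ path. A set $R\subseteq V(G)$ is a resolving set if for all distinct $x,y\in V(G)$ there is $r\in R$ with $d(r,x)\neq d(r,y)$. The metric dimension $\dim(G)$ is the minimum cardinality of a resolving set, and a resolving set of cardinality $\dim(G)$ is a metric basis. A cut-vertex is a vertex $v$ such that $G-v$ is disconnected. *)

(* Defs.v *)
From mathcomp Require Import all_boot.
Set Implicit Arguments. Unset Strict Implicit. Unset Printing Implicit Defensive.

Definition simple_graph (T : finType) (e : rel T) : Prop :=
  symmetric e /\ irreflexive e.

Definition connected_graph (T : finType) (e : rel T) : Prop :=
  forall x y : T, connect e x y.

Definition walkb (T : finType) (e : rel T) (x y : T) (n : nat) : bool :=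
  [exists p : n.-tuple T, path e x p && (last x p == y)].

(* A shortest path has fewer than #|T| edges,
   so searching n in [0, #|T|) suffices; if no walk exists the value is #|T|
   (irrelevant for connected graphs). *)
Definition dist (T : finType) (e : rel T) (x y : T) : nat :=
  find (walkb e x y) (iota 0 #|T|).

Definition resolving (T : finType) (e : rel T) (R : {set T}) : Prop :=
  forall x y : T, x != y -> exists2 r, r \in R & dist e r x != dist e r y.

Definition metric_basis (T : finType) (e : rel T) (R : {set T}) : Prop :=
  resolving e R /\ forall S : {set T}, resolving e S -> #|R| <= #|S|.

Definition del_rel (T : finType) (e : rel T) (v : T) : rel T :=
  fun x y => [&& x != v, y != v & e x y].

Definition cut_vertex (T : finType) (e : rel T) (v : T) : Prop :=
  exists x y : T, [/\ x != v, y != v & ~~ connect (del_rel e v) x y].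

(* Main.v *)
Require Import Defs.
From mathcomp Require Import all_boot.
From mathcomp Require Import zify.
From Stdlib Require Import Classical.
Set Implicit Arguments. Unset Strict Implicit. Unset Printing Implicit Defensive.

Section G.
Variables (T : finType) (e : rel T).
Hypothesis esym : symmetric e.
Hypothesis eirr : irreflexive e.
Hypothesis econ : connected_graph e.

Definition walk x y n := exists p : seq T, [/\ size p = n, path e x p & last x p = y].

Lemma walkbP x y n : reflect (walk x y n) (walkb e x y n).
Proof.
apply: (iffP existsP).
  by case=> p /andP[pp /eqP lp]; exists (val p); rewrite size_tuple.
case=> p [sp pp lp]; have sp' : size p == n by apply/eqP.
by exists (Tuple sp'); rewrite /= pp lp eqxx.
Qed.

Lemma walk0 x : walk x x 0.
Proof. by exists [::]. Qed.

Lemma walk_cat x y z m n : walk x y m -> walk y z n -> walk x z (m + n).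
Proof.
case=> p [sp pp lp] [q [sq pq lq]]; exists (p ++ q).
by rewrite size_cat cat_path last_cat lp sp sq pp pq.
Qed.

Lemma walk_rev x y n : walk x y n -> walk y x n.
Proof.
case=> p [sp pp lp]; exists (rev (belast x p)); split.
- by rewrite size_rev size_belast.
- rewrite -lp rev_path; move: pp; apply: sub_path => a b; by rewrite esym.
- case: p sp pp lp => [|a p] _ _ /= lp; first by rewrite lp.
  by rewrite rev_cons last_rcons.
Qed.

Lemma walk_short x y : connect e x y -> exists2 n, n < #|T| & walk x y n.
Proof.
case/connectP=> p pp ->; case: (shortenP pp) => p' pp' up' _.
exists (size p'); last by exists p'.
move/card_uniqP: up' => /= <-; exact: max_card.
Qed.


Notation d := (dist e).

Lemma dist_walk x y : walk x y (d x y).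
Proof.
have [n ltn wn] := walk_short (econ x y).
have hs : has (walkb e x y) (iota 0 #|T|).
  by apply/hasP; exists n; [rewrite mem_iota | apply/walkbP].
have := nth_find 0 hs; rewrite -/(dist e x y) nth_iota; last by rewrite -(size_iota 0 #|T|) -has_find.
by move/walkbP.
Qed.

Lemma dist_min x y n : walk x y n -> d x y <= n.
Proof.
move=> w; rewrite leqNgt; apply/negP => lt.
have hsz : d x y <= #|T| by have := find_size (walkb e x y) (iota 0 #|T|); rewrite size_iota.
have := before_find 0 lt; rewrite nth_iota; last by apply: leq_trans lt hsz.
by rewrite add0n; move/walkbP: w => ->.
Qed.

Lemma dist0 x : d x x = 0.
Proof. by apply/eqP; rewrite -leqn0; apply: dist_min; apply: walk0. Qed.

Lemma dist_eq0 x y : d x y = 0 -> x = y.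
Proof. have [p [sp _ lp]] := dist_walk x y; move=> h; rewrite h in sp; case: p sp lp => //. Qed.

Lemma dist_tri x y z : d x z <= d x y + d y z.
Proof. apply: dist_min; apply: walk_cat (dist_walk x y) (dist_walk y z). Qed.

Lemma dist_sym x y : d x y = d y x.
Proof.
by apply/eqP; rewrite eqn_leq !dist_min //; apply: walk_rev; apply: dist_walk.
Qed.

Lemma dist_edge x y : e x y -> d x y <= 1.
Proof. by move=> h; apply: dist_min; exists [:: y]; rewrite /= h. Qed.


Notation D v := (del_rel e v).

Lemma del_sym v : symmetric (D v).
Proof. by move=> x y; rewrite /del_rel esym; case: (x != v); case: (y != v). Qed.

Lemma path_del_all v z p : path (D v) z p -> all (fun x => x != v) p.
Proof.
elim: p z => //= a p IH z /andP[/and3P[_ -> _] pp] /=; exact: IH pp.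
Qed.

Lemma conn_del_v v z : connect (D v) z v -> z = v.
Proof.
case/connectP=> p pp lp; have := path_del_all pp.
have := mem_last z p; rewrite -lp inE => /orP[/eqP -> //|vp] /allP /(_ _ vp).
by rewrite eqxx.
Qed.

Lemma conn_sym v x y : connect (D v) x y = connect (D v) y x.
Proof. apply: sym_connect_sym; exact: del_sym. Qed.

Lemma path_to_del v z p : z != v -> v \notin p -> path e z p -> path (D v) z p.
Proof.
elim: p z => //= a p IH z zv; rewrite inE negb_or => /andP[va vp] /andP[eza pp].
rewrite /del_rel zv eq_sym va eza /=; apply: IH => //; by rewrite eq_sym.
Qed.

Lemma sepK v z w : ~~ connect (D v) z w -> d z w = d z v + d v w.
Proof.
move=> nc; apply/eqP; rewrite eqn_leq dist_tri /=.
have [p [sp pp lp]] := dist_walk z w.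
have [zv|zv] := eqVneq z v; first by rewrite zv dist0.
case: (boolP (v \in p)) => vp.
  move: sp pp lp; case/path.splitP: vp => p1 p2 sp pp lp.
  rewrite cat_path last_cat last_rcons in pp lp; case/andP: pp => pp1 pp2.
  rewrite -sp size_cat; apply: leq_add; apply: dist_min.
    by exists (rcons p1 v); rewrite last_rcons.
  by exists p2.
case/negP: nc; apply/connectP; exists p => //; exact: path_to_del.
Qed.


Lemma sepK' v r x : ~~ connect (D v) x r -> d r x = d r v + d v x.
Proof. by move=> h; apply: sepK; rewrite conn_sym. Qed.

Lemma dist_pos x y : x != y -> 0 < d x y.
Proof. by move=> xy; rewrite lt0n; apply/eqP => /dist_eq0 /eqP; apply/negP. Qed.

Lemma conn_tr v x y z : connect (D v) x y -> connect (D v) y z -> connect (D v) x z.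
Proof. exact: connect_trans. Qed.

Lemma nbr_comp v a : a != v -> exists2 a', e v a' & connect (D v) a' a.
Proof.
move=> av; have [p [sp pp lp]] := dist_walk v a.
case: p sp pp lp => [|a' p] sp pp lp; first by move: av; rewrite -lp eqxx.
case/andP: pp => ea pp; exists a' => //.
apply/negP => /negP nc; have := sepK nc.
have h1 : d a' a <= size p by apply: dist_min; exists p.
have h2 : 0 < d a' v by apply: dist_pos; apply/eqP => E; move: ea; rewrite E eirr.
move: sp => /= sp; lia.
Qed.

Lemma res_other R v : resolving e R -> cut_vertex e v -> exists2 r, r \in R & r != v.
Proof.
move=> res [a [b [av bv nab]]].
have [a' ea' ca] := nbr_comp av; have [b' eb' cb] := nbr_comp bv.
have ab' : a' != b'.
  apply/eqP => E; case/negP: nab; rewrite conn_sym in ca.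
  by apply: conn_tr ca _; rewrite E.
have d1 : forall z, e v z -> d v z = 1.
  move=> z ez; apply/eqP; rewrite eqn_leq dist_edge // dist_pos //.
  by apply/eqP => E; move: ez; rewrite E eirr.
have [r rR hr] := res _ _ ab'; exists r => //.
by apply/eqP => E; move: hr; rewrite E !d1 ?eqxx.
Qed.


Lemma step1 R v : metric_basis e R -> v \in R -> cut_vertex e v ->
  exists2 c, c != v & forall r, r \in R -> r != v -> ~~ connect (D v) c r.
Proof.
move=> [res mn] vR cv; apply: NNPP => nH.
have H : forall c, c != v -> exists r, [/\ r \in R, r != v & connect (D v) c r].
  move=> c cv'; apply: NNPP => nr; apply: nH; exists c => // r rR rv.
  by apply/negP => crr; apply: nr; exists r.
have [a [b [av bv nab]]] := cv.
have O : forall z, exists r, [/\ r \in R, r != v & ~~ connect (D v) z r].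
  move=> z; have [zv|zv] := eqVneq z v.
    have [r [rR rv _]] := H a av; exists r; split=> //; rewrite zv.
    by apply/negP; rewrite conn_sym => /conn_del_v /eqP; apply/negP.
  case: (boolP (connect (D v) z a)) => za.
    have [r [rR rv br]] := H b bv; exists r; split=> //; apply/negP => zr.
    case/negP: nab; apply: (@conn_tr _ _ z); first by rewrite conn_sym.
    apply: conn_tr zr _; by rewrite conn_sym.
  have [r [rR rv ar]] := H a av; exists r; split=> //; apply/negP => zr.
  case/negP: za; apply: conn_tr zr _; by rewrite conn_sym.
suff rs : resolving e (R :\ v).
  have := mn _ rs; rewrite (cardsD1 v R) vR; lia.
move=> x y xy; have [r rR hr] := res _ _ xy.
have [rv|rv] := eqVneq r v; last by exists r; rewrite // in_setD1 rv.
rewrite rv in hr.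
have inD : forall r, r \in R -> r != v -> r \in R :\ v by move=> r' ? ?; rewrite in_setD1; apply/andP.
case: (boolP (connect (D v) x y)) => cxy.
  have [r' [r'R r'v nxr]] := O x; exists r'; first exact: inD.
  have nyr : ~~ connect (D v) y r'.
    apply/negP => yr; case/negP: nxr; exact: conn_tr cxy yr.
  rewrite (sepK' nxr) (sepK' nyr); move: hr; apply: contra => /eqP h; apply/eqP; clear -h; lia.
have [xv|xv] := eqVneq x v.
  have [r' [r'R r'v nyr]] := O y; exists r'; first exact: inD.
  rewrite (sepK' nyr) xv; have : 0 < d v y by apply: dist_pos; rewrite -xv.
  move=> h; apply/eqP; clear -h; lia.
have [yv|yv] := eqVneq y v.
  have [r' [r'R r'v nxr]] := O x; exists r'; first exact: inD.
  rewrite (sepK' nxr) yv; have : 0 < d v x by apply: dist_pos; rewrite -yv eq_sym.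
  move=> h; apply/eqP; clear -h; lia.
have [r1 [r1R r1v yr1]] := H y yv; have [r2 [r2R r2v xr2]] := H x xv.
have nx1 : ~~ connect (D v) x r1.
  apply/negP => h; case/negP: cxy; apply: conn_tr h _; by rewrite conn_sym.
have ny2 : ~~ connect (D v) y r2.
  apply/negP => h; case/negP: cxy; rewrite conn_sym; apply: conn_tr h _; by rewrite conn_sym.
have t1 := dist_tri r1 v y; have t2 := dist_tri r2 v x.
have e1 := sepK' nx1; have e2 := sepK' ny2.
case: (eqVneq (d r1 x) (d r1 y)) => h1; last by exists r1 => //; apply: inD.
case: (eqVneq (d r2 x) (d r2 y)) => h2; last by exists r2 => //; apply: inD.
move: hr => /eqP hr; clear -hr e1 e2 t1 t2 h1 h2; lia.
Qed.


Lemma step2 R v : metric_basis e R -> v \in R -> cut_vertex e v ->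
  exists u, [/\ ~ cut_vertex e u, u \notin R & metric_basis e (u |: (R :\ v))].
Proof.
move=> mb vR cv; have [c cv' cP] := step1 mb vR cv.
have [res mn] := mb.
pose C := [pred z | connect (D v) c z].
have Cc : C c by exact: connect0.
have [u Cu umax] := @arg_maxnP T c C (d v) Cc.
have uv : u != v by apply/eqP => E; move: Cu; rewrite /= E => /conn_del_v /eqP; apply/negP.
have uR : u \notin R by apply/negP => uR; have := cP u uR uv; by move/negP; apply; exact: Cu.
exists u; split => //.
- move=> [x [y [xu yu nxy]]].
  have cl : forall z, z != u -> connect (D u) z v.
    move=> z zu; apply: NNPP => /negP nz.
    have E1 : d v z = d v u + d u z by apply: sepK; rewrite conn_sym.
    have p1 : 0 < d u z by apply: dist_pos; rewrite eq_sym.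
    case: (boolP (C z)) => Cz.
      have := umax z Cz; rewrite /= => h; clear -E1 p1 h; lia.
    have nuz : ~~ connect (D v) u z.
      apply/negP => h; move/negP: Cz; apply; exact: conn_tr Cu h.
    have E2 := sepK nuz; have s := dist_sym u v.
    have : d v u = 0 by clear -E1 E2 s; lia.
    by move/dist_eq0 => E; move: uv; rewrite E eqxx.
  case/negP: nxy; apply: conn_tr (cl x xu) _; rewrite conn_sym; exact: cl.
- have cardE : #|u |: (R :\ v)| = #|R|.
    rewrite cardsU1 in_setD1 (negbTE uR) andbF (cardsD1 v R) vR; by [].
  split; last by move=> S rS; rewrite cardE; exact: mn.
  have [r0 r0R r0v] := res_other res cv.
  have nc0 := cP r0 r0R r0v.
  have inR' : forall r, r \in R -> r != v -> r \in u |: (R :\ v).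
    by move=> r rR rv; rewrite !inE rR rv orbT.
  have uR' : u \in u |: (R :\ v) by rewrite !inE eqxx.
  have caseC : forall x y, C x -> d v x != d v y ->
      exists2 r, r \in u |: (R :\ v) & d r x != d r y.
    move=> x y Cx hxy.
    have nx0 : ~~ connect (D v) x r0.
      apply/negP => h; case/negP: nc0; exact: conn_tr Cx h.
    have e0 := sepK' nx0; have t0 := dist_tri r0 v y.
    case: (eqVneq (d r0 x) (d r0 y)) => h0; last by exists r0 => //; apply: inR'.
    case: (boolP (C y)) => Cy.
      have ny0 : ~~ connect (D v) y r0.
        apply/negP => h; case/negP: nc0; exact: conn_tr Cy h.
      have e0' := sepK' ny0; move/eqP: hxy => hxy; exfalso; clear -e0 e0' h0 hxy; lia.
    have nuy : ~~ connect (D v) u y.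
      apply/negP => h; move/negP: Cy; apply; exact: conn_tr Cu h.
    have eu := sepK nuy; have tu := dist_tri u v x.
    case: (eqVneq (d u x) (d u y)) => hu; last by exists u.
    move/eqP: hxy => hxy; exfalso; clear -e0 t0 h0 eu tu hu hxy; lia.
  move=> x y xy; have [r rR hr] := res _ _ xy.
  have [rv|rv] := eqVneq r v; last by exists r => //; apply: inR'.
  rewrite rv in hr.
  case: (boolP (C x)) => Cx; first exact: caseC.
  case: (boolP (C y)) => Cy.
    have [r' r'R h'] := caseC y x Cy ltac:(by rewrite eq_sym).
    by exists r' => //; rewrite eq_sym.
  have nux : ~~ connect (D v) u x.
    apply/negP => h; move/negP: Cx; apply; exact: conn_tr Cu h.
  have nuy : ~~ connect (D v) u y.
    apply/negP => h; move/negP: Cy; apply; exact: conn_tr Cu h.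
  exists u => //; rewrite (sepK nux) (sepK nuy).
  move: hr; apply: contra => /eqP h; apply/eqP; clear -h; lia.
Qed.


Definition resb (R : {set T}) :=
  [forall x, forall y, (x != y) ==> [exists r in R, d r x != d r y]].

Lemma resbP R : reflect (resolving e R) (resb R).
Proof.
apply: (iffP forallP) => [h x y xy | h x].
  have /forallP /(_ y) /implyP /(_ xy) /existsP [r /andP [rR hr]] := h x.
  by exists r.
apply/forallP => y; apply/implyP => xy; have [r rR hr] := h x y xy.
by apply/existsP; exists r; rewrite rR.
Qed.

Lemma exists_basis : exists R, metric_basis e R.
Proof.
have rT : resb setT.
  apply/resbP => x y xy; exists x; first by rewrite inE.
  rewrite dist0; apply/eqP => h; move/eqP: xy; apply; apply: dist_eq0; by rewrite -h.
have [R rR Rmin] := @arg_minnP _ setT resb (fun S => #|S|) rT.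
exists R; split; first exact/resbP.
by move=> S /resbP rS; apply: Rmin.
Qed.

Definition cvb v := [exists x, exists y, [&& x != v, y != v & ~~ connect (D v) x y]].

Lemma cvbP v : reflect (cut_vertex e v) (cvb v).
Proof.
apply: (iffP existsP) => [[x /existsP [y /and3P [? ? ?]]] | [x [y [? ? ?]]]].
  by exists x, y.
by exists x; apply/existsP; exists y; apply/and3P.
Qed.

Lemma main_ind n : forall R, metric_basis e R -> #|[set w in R | cvb w]| <= n ->
  exists R, metric_basis e R /\ (forall v, v \in R -> ~ cut_vertex e v).
Proof.
elim: n => [|n IH] R mb hn.
  exists R; split => // v vR /cvbP cv.
  have := cardsD1 v [set w in R | cvb w]; rewrite inE vR cv /=; clear -hn; lia.
case: (classic (exists v, v \in R /\ cut_vertex e v)) => [[v [vR cv]]|nH]; last first.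
  by exists R; split => // v vR cv; apply: nH; exists v.
have [u [ncu uR mb']] := step2 mb vR cv.
apply: (IH _ mb').
have sub : [set w in u |: (R :\ v) | cvb w] \subset [set w in R | cvb w] :\ v.
  apply/subsetP => w; rewrite !inE => /andP [/orP [/eqP -> | /andP [wv wR]] cw].
    by case: ncu; apply/cvbP.
  by rewrite wv wR cw.
have := subset_leq_card sub; have := cardsD1 v [set w in R | cvb w].
rewrite inE vR (introT (cvbP v) cv) /=; clear -hn; lia.
Qed.

End G.

Theorem corollary1 (T : finType) (e : rel T) :
  simple_graph e -> connected_graph e ->
  exists R : {set T}, metric_basis e R /\ (forall v, v \in R -> ~ cut_vertex e v).
Proof.
move=> [esym eirr] econ.
have [R mb] := exists_basis econ.
exact: (main_ind esym eirr econ mb (leqnn _)).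
Qed.
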